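(* Let $\mathcal K$ be an even normalized kernel with $3\le\mathfrak m_4$, let $w_1,w_2>0$, $u_1\le u_2$ real and $\sigma>0$, and set $$\tilde u=\frac{w_1u_1+w_2u_2}{w_1+w_2}+\frac{4(\mathfrak m_4-3)\sigma^2(w_1-w_2)(u_1-u_2)}{(w_1+w_2)[(u_1-u_2)^2+2(\mathfrak m_4-3)\sigma^2]}$$ (the second term being $0$ when $u_1=u_2$), and $g(u)=(u-u_1)^2(u-u_2)^2(u-\tilde u)$. If the constants $c_1,c_2$ satisfy $c_1>0$ and $0<c_2<\frac56c_1^2$, then for every $s>0$ the polynomial $$h(u;s)=g(u)-c_1s\,g^{(2)}(u)+c_2s^2g^{(4)}(u)$$ has $5$ distinct real roots.
   Context: $\mathcal K:\mathbb R\to[0,\infty)$ is a kernel with $\mathfrak m_j:=\int_{\mathbb R}\xi^j\mathcal K(\xi)\,d\xi<\infty$ for all $j$, normalized so that $\mathfrak m_0=1,\mathfrak m_1=0,\mathfrak m_2=1$; $g^{(k)}$ denotes the $k$-th derivative of $g$ in $u$. *)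

(* Defs.v *)
From HB Require Import structures.
From mathcomp Require Import all_boot all_order all_algebra.
From mathcomp Require Import all_classical all_reals all_analysis.
Set Implicit Arguments. Unset Strict Implicit. Unset Printing Implicit Defensive.
Import Order.TTheory GRing.Theory Num.Theory.
Local Open Scope ring_scope.
Local Open Scope classical_set_scope.

Definition moment (R : realType) (K : R -> R) (j : nat) : R :=
  Rintegral (@lebesgue_measure R) setT (fun x => x ^+ j * K x).

Definition normalized_kernel (R : realType) (K : R -> R) : Prop :=
  (forall x, 0 <= K x) /\
  (forall j : nat,
     (@lebesgue_measure R).-integrable setT (fun x => (x ^+ j * K x)%:E)) /\
  moment K 0 = 1 /\ moment K 1 = 0 /\ moment K 2 = 1.

Definition even_kernel (R : realType) (K : R -> R) : Prop :=
  forall x, K (- x) = K x.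

Definition utilde (R : realType) (m4 w1 w2 u1 u2 sigma : R) : R :=
  (w1 * u1 + w2 * u2) / (w1 + w2) +
  (if u1 == u2 then 0 else
     4 * (m4 - 3) * sigma ^+ 2 * (w1 - w2) * (u1 - u2) /
     ((w1 + w2) * ((u1 - u2) ^+ 2 + 2 * (m4 - 3) * sigma ^+ 2))).

Definition gpoly (R : realType) (m4 w1 w2 u1 u2 sigma : R) : {poly R} :=
  ('X - u1%:P) ^+ 2 * ('X - u2%:P) ^+ 2 * ('X - (utilde m4 w1 w2 u1 u2 sigma)%:P).

Definition hpoly (R : realType) (m4 w1 w2 u1 u2 sigma c1 c2 s : R) : {poly R} :=
  let g := gpoly m4 w1 w2 u1 u2 sigma in
  g - (c1 * s) *: g^`(2) + (c2 * s ^+ 2) *: g^`(4).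

(* Main.v *)
Require Import Defs.
From HB Require Import structures.
From mathcomp Require Import all_boot all_order all_algebra.
From mathcomp Require Import all_classical all_reals all_analysis.
From mathcomp Require Import ring lra.
Set Implicit Arguments. Unset Strict Implicit.
Import Order.TTheory GRing.Theory Num.Theory numFieldNormedType.Exports.
Local Open Scope ring_scope.


Lemma hpolyE (R : realType) (m4 w1 w2 u1 u2 sigma c1 c2 s x : R) :
  let w := utilde m4 w1 w2 u1 u2 sigma in
  let a := c1  *  s in let b := c2  *  s ^+ 2 in
  let S := u1 + u2 in let p := u1  *  u2 in
  let k4 := -(2 * S + w) in let k3 := S^+2 + 2 * p + 2 * S * w in
  let k2 := -(2 * S * p + w * (S^+2+2 * p)) in let k1 := p^+2 + 2 * S * p * w in
  let k0 := - p^+2  *  w in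
  (hpoly m4 w1 w2 u1 u2 sigma c1 c2 s).[x] =
   x^+5 + k4 * x^+4 + k3 * x^+3 + k2 * x^+2 + k1 * x + k0
   - a * (20 * x^+3 + 12 * k4 * x^+2 + 6 * k3 * x + 2 * k2) + b * (120 * x + 24 * k4).
Proof.
move=> w a b S p k4 k3 k2 k1 k0.
have gE : gpoly m4 w1 w2 u1 u2 sigma =
  'X^5 + k4  *: 'X^4 + k3  *: 'X^3 + k2  *: 'X^2 + k1  *: 'X^1 + k0  *: 'X^0.
  rewrite /gpoly -/w -!mul_polyC expr0 expr1 /k4 /k3 /k2 /k1 /k0 /S /p.
  rewrite !(rmorphN, rmorphD, rmorphM, rmorphXn) /=.
  ring.
rewrite /hpoly gE !(derivnD, derivnZ, derivnXn) /=.
rewrite !subSS !subn0 !hornerE /= /a /b.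
ring.
Qed.

Definition Hf (R : realType) (d t a b v : R) : R :=
  v ^+ 5 - (2 * d ^+ 2 + 20 * a) * v ^+ 3 + (d ^+ 4 + 12 * a * d ^+ 2 + 120 * b) * v
  - t * (v ^+ 4 - (2 * d ^+ 2 + 12 * a) * v ^+ 2 + (d ^+ 4 + 4 * a * d ^+ 2 + 24 * b)).

Lemma Hroot (R : realType) (d t a b r y : R) : r ^+ 2 = y ->
  y ^+ 2 - (2 * d ^+ 2 + 12 * a) * y + (d ^+ 4 + 4 * a * d ^+ 2 + 24 * b) = 0 ->
  Hf d t a b r = 8 * r * (a * d ^+ 2 + 12 * b - a * y).
Proof.
move=> ry Qy.
have -> : Hf d t a b r = r * ((r ^+ 2) ^+ 2 - (2 * d ^+ 2 + 20 * a) * r ^+ 2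
   + (d ^+ 4 + 12 * a * d ^+ 2 + 120 * b))
  - t * ((r ^+ 2) ^+ 2 - (2 * d ^+ 2 + 12 * a) * r ^+ 2 + (d ^+ 4 + 4 * a * d ^+ 2 + 24 * b)).
  by rewrite /Hf; ring.
rewrite ry Qy.
have -> : y ^+ 2 = (2 * d ^+ 2 + 12 * a) * y - (d ^+ 4 + 4 * a * d ^+ 2 + 24 * b).
  by apply/eqP; rewrite -subr_eq0 -Qy; apply/eqP; ring.
ring.
Qed.

Lemma bound5 (R : realType) (V t P P' Q Q' : R) :
  0 <= P -> 0 <= P' -> 0 <= Q -> 0 <= Q' -> 1 <= V ->
  `|t| + P + `|t| * P' + `|t| * Q' < V ->
  0 < V ^+ 5 - t * V ^+ 4 - P * V ^+ 3 + t * P' * V ^+ 2 + Q * V - t * Q'.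
Proof.
move=> hP hP' hQ hQ' hV hS.
have V0 : 0 <= V by lra.
have h2 : V ^+ 2 <= V ^+ 4.
  have : 0 <= V ^+ 2 * (V ^+ 2 - 1).
    apply: mulr_ge0; first exact: sqr_ge0.
    rewrite subr_ge0 expr2; nra.
  by rewrite mulrBr mulr1 -exprD subr_ge0.
have h3 : V ^+ 3 <= V ^+ 4.
  have : 0 <= V ^+ 3 * (V - 1) by apply: mulr_ge0; [exact: exprn_ge0|lra].
  by rewrite mulrBr mulr1 -exprSr subr_ge0.
have h1 : 1 <= V ^+ 4 by rewrite exprn_ege1.
have T0 := normr_ge0 t.
have tl : - `|t| <= t by exact: lerNnormlW.
have tu : t <= `|t| by exact: ler_norm.
have e1 : t * V ^+ 4 <= `|t| * V ^+ 4 by rewrite ler_wpM2r // exprn_ge0.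
have e2 : P * V ^+ 3 <= P * V ^+ 4 by rewrite ler_wpM2l.
have e3 : - (`|t| * P' * V ^+ 4) <= t * P' * V ^+ 2.
  have : - `|t| * (P' * V ^+ 2) <= t * (P' * V ^+ 2).
    by rewrite ler_wpM2r // mulr_ge0 // exprn_ge0.
  have : `|t| * P' * V ^+ 2 <= `|t| * P' * V ^+ 4 by rewrite ler_wpM2l // mulr_ge0.
  rewrite !mulrA mulNr; lra.
have e4 : t * Q' <= `|t| * Q' * V ^+ 4.
  have : t * Q' <= `|t| * Q' by rewrite ler_wpM2r.
  have : `|t| * Q' * 1 <= `|t| * Q' * V ^+ 4 by rewrite ler_wpM2l // mulr_ge0.
  rewrite mulr1; lra.
have e5 : 0 <= Q * V by apply: mulr_ge0.
have e6 : V ^+ 4 * (V - (`|t| + P + `|t| * P' + `|t| * Q')) > 0.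
  apply: mulr_gt0; lra.
have e7 : V ^+ 5 = V ^+ 4 * V by rewrite exprSr.
have e8 : V ^+ 4 * (V - (`|t| + P + `|t| * P' + `|t| * Q')) =
  V ^+ 4 * V - `|t| * V ^+ 4 - P * V ^+ 4 - `|t| * P' * V ^+ 4 - `|t| * Q' * V ^+ 4 by ring.
rewrite e7; lra.
Qed.

Lemma core (R : realType) (d t a b : R) : 0 < a -> 0 < b -> b < 5 / 6 * a ^+ 2 ->
  exists p0 p1 p2 p3 p4 p5 : R,
    [/\ p0 < p1, p1 < p2, p2 < p3, p3 < p4 & p4 < p5] /\
    [/\ Hf d t a b p0 < 0, 0 < Hf d t a b p1 & Hf d t a b p2 < 0] /\
    [/\ 0 < Hf d t a b p3, Hf d t a b p4 < 0 & 0 < Hf d t a b p5].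
Proof.
move=> a0 b0 ba.
set D := 8 * a * d ^+ 2 + 36 * a ^+ 2 - 24 * b.
have d2 : 0 <= d ^+ 2 by exact: sqr_ge0.
have D0 : 0 < D.
  have : 0 <= a * d ^+ 2 by apply: mulr_ge0; lra.
  rewrite /D; move: ba; rewrite -[a ^+ 2]/(a ^+ 2); lra.
set q := Num.sqrt D.
have q0 : 0 < q by rewrite sqrtr_gt0.
have qD : q ^+ 2 = D by rewrite sqr_sqrtr // ltW.
set e := d ^+ 2 + 6 * a.
have e0 : 0 < e by rewrite /e; lra.
set K0 := d ^+ 4 + 4 * a * d ^+ 2 + 24 * b.
have K00 : 0 < K0.
  have : 0 <= d ^+ 4 by rewrite -[4%N]/(2 * 2)%N exprM; exact: sqr_ge0.
  have : 0 <= a * d ^+ 2 by apply: mulr_ge0; lra.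
  rewrite /K0; lra.
have eqK : e ^+ 2 - q ^+ 2 = K0.
  by rewrite qD /e /D /K0; ring.
have qe : q < e.
  rewrite -subr_gt0.
  have : 0 < (e - q) * (e + q) by rewrite -subr_sqr eqK.
  rewrite pmulr_lgt0 //; lra.
set ym := e - q.
set yp := e + q.
have ym0 : 0 < ym by rewrite /ym subr_gt0.
have ymp : ym < yp by rewrite /ym /yp; lra.
have Qgen : forall y, y ^+ 2 - (2 * d ^+ 2 + 12 * a) * y + K0 = (y - ym) * (y - yp).
  move=> y; rewrite -eqK /ym /yp /e; ring.
have Qm : ym ^+ 2 - (2 * d ^+ 2 + 12 * a) * ym + K0 = 0 by rewrite Qgen subrr mul0r.
have Qp : yp ^+ 2 - (2 * d ^+ 2 + 12 * a) * yp + K0 = 0 by rewrite Qgen subrr mulr0.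
set z := a * d ^+ 2 + 12 * b.
have Qz : (z - a * ym) * (z - a * yp) < 0.
  have -> : (z - a * ym) * (z - a * yp) = a ^+ 2 * ((z / a - ym) * (z / a - yp)).
    by field; lra.
  rewrite -Qgen.
  have -> : a ^+ 2 * ((z / a) ^+ 2 - (2 * d ^+ 2 + 12 * a) * (z / a) + K0)
     = 144 * b ^+ 2 - 120 * a ^+ 2 * b - 8 * a ^+ 3 * d ^+ 2.
    by rewrite /z /K0; field; lra.
  have : 0 <= a ^+ 3 * d ^+ 2 by apply: mulr_ge0 => //; apply: exprn_ge0; lra.
  have : 144 * b ^+ 2 < 120 * a ^+ 2 * b.
    have -> : 144 * b ^+ 2 = (144 * b) * b by ring.
    by rewrite ltr_pM2r //; lra.
  lra.
have azp : a * ym < a * yp by rewrite ltr_pM2l.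
have zm : 0 < z - a * ym.
  rewrite ltNge; apply/negP => h.
  have : 0 <= (z - a * ym) * (z - a * yp) by apply: mulr_le0 => //; lra.
  lra.
have zp : z - a * yp < 0.
  rewrite ltNge; apply/negP => h.
  have : 0 <= (z - a * ym) * (z - a * yp) by rewrite mulr_ge0 //; lra.
  lra.
set rm := Num.sqrt ym.
set rp := Num.sqrt yp.
have rm0 : 0 < rm by rewrite sqrtr_gt0.
have rmp : rm < rp by rewrite ltr_sqrt //; lra.
have rm2 : rm ^+ 2 = ym by rewrite sqr_sqrtr // ltW.
have rp2 : rp ^+ 2 = yp by rewrite sqr_sqrtr //; lra.
have Hrm : Hf d t a b rm = 8 * rm * (z - a * ym) by rewrite (@Hroot _ d t a b rm ym rm2 Qm).
have Hrp : Hf d t a b rp = 8 * rp * (z - a * yp) by rewrite (@Hroot _ d t a b rp yp rp2 Qp).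
have Hnrm : Hf d t a b (- rm) = - (8 * rm * (z - a * ym)).
  by rewrite (@Hroot _ d t a b (- rm) ym) ?sqrrN // /z; ring.
have Hnrp : Hf d t a b (- rp) = - (8 * rp * (z - a * yp)).
  by rewrite (@Hroot _ d t a b (- rp) yp) ?sqrrN // /z; ring.
set P := 2 * d ^+ 2 + 20 * a.
set P' := 2 * d ^+ 2 + 12 * a.
set Q := d ^+ 4 + 12 * a * d ^+ 2 + 120 * b.
have hP : 0 <= P by rewrite /P; lra.
have hP' : 0 <= P' by rewrite /P'; lra.
have hQ : 0 <= Q.
  have : 0 <= d ^+ 4 by rewrite -[4%N]/(2 * 2)%N exprM; exact: sqr_ge0.
  have : 0 <= a * d ^+ 2 by apply: mulr_ge0; lra.
  rewrite /Q; lra.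
have hK : 0 <= K0 by lra.
set V := 1 + rp + (`|t| + P + `|t| * P' + `|t| * K0).
have T0 := normr_ge0 t.
have hPP : 0 <= `|t| * P' by apply: mulr_ge0.
have hKK : 0 <= `|t| * K0 by apply: mulr_ge0.
have V1 : 1 <= V by rewrite /V; lra.
have VS : `|t| + P + `|t| * P' + `|t| * K0 < V by rewrite /V; lra.
have HV : Hf d t a b V = V ^+ 5 - t * V ^+ 4 - P * V ^+ 3 + t * P' * V ^+ 2 + Q * V - t * K0.
  by rewrite /Hf /P /P' /Q /K0; ring.
have HnV : Hf d t a b (- V) = - (V ^+ 5 - (- t) * V ^+ 4 - P * V ^+ 3
      + (- t) * P' * V ^+ 2 + Q * V - (- t) * K0).
  by rewrite /Hf /P /P' /Q /K0; ring.
have B1 := bound5 hP hP' hQ hK V1 VS.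
have B2 : 0 < V ^+ 5 - (- t) * V ^+ 4 - P * V ^+ 3
      + (- t) * P' * V ^+ 2 + Q * V - (- t) * K0.
  by apply: bound5 => //; rewrite normrN.
exists (- V), (- rp), (- rm), rm, rp, V.
split; [split|split; split].
- rewrite ltrN2 /V; lra.
- by rewrite ltrN2.
- lra.
- done.
- rewrite /V; lra.
- by rewrite HnV oppr_lt0.
- by rewrite Hnrp oppr_gt0 pmulr_rlt0 // mulr_gt0 //; lra.
- by rewrite Hnrm oppr_lt0 mulr_gt0 // mulr_gt0.
- by rewrite Hrm mulr_gt0 // mulr_gt0.
- by rewrite Hrp pmulr_rlt0 // mulr_gt0 //; lra.
- by rewrite HV.
Qed.

Lemma ivt0 (R : realType) (p : {poly R}) (x y : R) : x < y -> p.[x] * p.[y] < 0 ->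
  exists2 c, x < c < y & root p c.
Proof.
move=> xy hxy.
have hx : p.[x] != 0 by apply/eqP => h; move: hxy; rewrite h mul0r ltxx.
have hy : p.[y] != 0 by apply/eqP => h; move: hxy; rewrite h mulr0 ltxx.
have [c cin pc] : exists2 c, c \in `[x, y] & horner p c = 0.
  apply: IVT; first exact: ltW.
    by apply/continuous_subspaceT => z; exact: continuous_horner.
  rewrite ge_min le_max.
  have [px|px] := ltP p.[x] 0.
    have py : 0 < p.[y].
      rewrite ltNge; apply/negP => py.
      have : 0 <= p.[x] * p.[y] by apply: mulr_le0 => //; lra.
      lra.
    by apply/andP; split; apply/orP; [left|right]; lra.
  have py : p.[y] < 0.
    rewrite ltNge; apply/negP => py.
    have : 0 <= p.[x] * p.[y] by apply: mulr_ge0.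
    lra.
  by apply/andP; split; apply/orP; [right|left]; lra.
exists c; last by rewrite /root; apply/eqP.
move: cin; rewrite in_itv /= => /andP [c1 c2].
rewrite !lt_neqAle c1 c2 !andbT; apply/andP; split.
  by apply/eqP => h; move: hx; rewrite h pc eqxx.
by apply/eqP => h; move: hy; rewrite -h pc eqxx.
Qed.

Lemma mul_np (R : realType) (x y : R) : x < 0 -> 0 < y -> x * y < 0.
Proof. by move=> hx hy; rewrite pmulr_llt0. Qed.

Lemma mul_pn (R : realType) (x y : R) : 0 < x -> y < 0 -> x * y < 0.
Proof. by move=> hx hy; rewrite pmulr_rlt0. Qed.

Theorem proposition4p3 (R : realType) (K : R -> R)
  (w1 w2 u1 u2 sigma c1 c2 : R) :
  normalized_kernel K -> even_kernel K -> 3 <= moment K 4 ->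
  0 < w1 -> 0 < w2 -> u1 <= u2 -> 0 < sigma ->
  0 < c1 -> 0 < c2 -> c2 < 5 / 6 * c1 ^+ 2 ->
  forall s : R, 0 < s ->
    exists rs : seq R,
      [/\ size rs = 5%N, uniq rs &
          all (root (hpoly (moment K 4) w1 w2 u1 u2 sigma c1 c2 s)) rs].
Proof.
move=> _ _ _ w10 w20 _ _ c10 c20 c2c s s0.
set h := hpoly (moment K 4) w1 w2 u1 u2 sigma c1 c2 s.
set w := utilde (moment K 4) w1 w2 u1 u2 sigma.
pose a := c1 * s; pose b := c2 * s ^+ 2.
have a0 : 0 < a by rewrite /a mulr_gt0.
have b0 : 0 < b by rewrite /b mulr_gt0 // exprn_gt0.
have ba : b < 5 / 6 * a ^+ 2.
  have -> : 5 / 6 * a ^+ 2 = (5 / 6 * c1 ^+ 2) * s ^+ 2 by rewrite /a; ring.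
  by rewrite /b ltr_pM2r // exprn_gt0.
pose m := (u1 + u2) / 2; pose d := (u2 - u1) / 2; pose t := w - m.
have key : forall v, h.[m + v] = Hf d t a b v.
  move=> v; rewrite /h hpolyE -/w /Hf /t /m /d /a /b.
  by field; rewrite ?pnatr_eq0.
have [p0 [p1 [p2 [p3 [p4 [p5 [[l01 l12 l23 l34 l45] [[s0' s1 s2] [s3 s4 s5]]]]]]]]] :=
  core d t a0 b0 ba.
have [r1 /andP[a1 b1] hr1] : exists2 c, m + p0 < c < m + p1 & root h c.
  by apply: ivt0; [rewrite ltrD2l | rewrite !key; apply: mul_np].
have [r2 /andP[a2 b2] hr2] : exists2 c, m + p1 < c < m + p2 & root h c.
  by apply: ivt0; [rewrite ltrD2l | rewrite !key; apply: mul_pn].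
have [r3 /andP[a3 b3] hr3] : exists2 c, m + p2 < c < m + p3 & root h c.
  by apply: ivt0; [rewrite ltrD2l | rewrite !key; apply: mul_np].
have [r4 /andP[a4 b4] hr4] : exists2 c, m + p3 < c < m + p4 & root h c.
  by apply: ivt0; [rewrite ltrD2l | rewrite !key; apply: mul_pn].
have [r5 /andP[a5 b5] hr5] : exists2 c, m + p4 < c < m + p5 & root h c.
  by apply: ivt0; [rewrite ltrD2l | rewrite !key; apply: mul_np].
exists [:: r1; r2; r3; r4; r5]; split => //.
  apply: lt_sorted_uniq => /=.
  by rewrite (lt_trans b1 a2) (lt_trans b2 a3) (lt_trans b3 a4) (lt_trans b4 a5).
by rewrite /= hr1 hr2 hr3 hr4 hr5.
Qed.
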